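(* Let $n\ge2$ and consider the parallel network with unit demand and latencies $\ell_i(x_i)=x_i$ for $i=1,\dots,n-1$ and constant latency $\ell_n(x_n)=\frac{1}{2(n-1)}$. Then for every $c\in\mathbb{R}_+\cup\{\infty\}$ and every $t\in\mathcal{T}(c)$, the induced flow is $x(t)=\left(\frac{1}{2(n-1)},\dots,\frac{1}{2(n-1)},\frac12\right)=x(0)$, while the optimal flow is $x^*=\left(\frac{1}{4(n-1)},\dots,\frac{1}{4(n-1)},\frac34\right)$. Consequently every price cap is optimal and $$\min_{c}\ \frac{C(x(c))}{C(x^* )}=\frac87 .$$
   Context: Flows $x\in\mathbb{R}^n_+$ with $\sum_ix_i=1$; $C(x)=\sum_i\ell_i(x_i)x_i$; $x^*$ minimizes $C$. For tolls $t\in\mathbb{R}^n_+$, $x(t)$ is the unique Wardrop equilibrium for $t$ (for all $i,j$ with $x_i>0$: $\ell_i(x_i)+t_i\le\ell_j(x_j)+t_j$); $x(0)$ is the untolled one. Profit $\Pi_i(t)=t_ix_i(t)$. For $c\in\mathbb{R}_+$, $\mathcal{T}(c)$ is the set of toll vectors with $0\le t_i\le c$ such that for every $i$ and every $t'_i\in[0,c]$, $\Pi_i(t_i,t_{-i})\ge\Pi_i(t'_i,t_{-i})$ (flow recomputed); $\mathcal{T}(\infty)$ is the same without upper bound. $x(c)$ denotes the flow induced by the $c$-capped equilibrium. *)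

(* Defs.v *)
From Stdlib Require Import Reals Lra Lia Arith.
Open Scope R_scope.

(* Links are indexed 0 .. n-1; flows/tolls are functions nat -> R,
   only the values at indices < n matter. *)
Fixpoint rsum (n : nat) (f : nat -> R) : R :=
  match n with O => 0 | S m => rsum m f + f m end.

Definition feasible (n : nat) (x : nat -> R) : Prop :=
  (forall i, (i < n)%nat -> 0 <= x i) /\ rsum n x = 1.

Definition wardrop (n : nat) (l : nat -> R -> R) (t x : nat -> R) : Prop :=
  feasible n x /\
  forall i j, (i < n)%nat -> (j < n)%nat -> 0 < x i ->
    l i (x i) + t i <= l j (x j) + t j.

Definition cost (n : nat) (l : nat -> R -> R) (x : nat -> R) : R :=
  rsum n (fun i => l i (x i) * x i).

(* price caps c in R_+ ∪ {∞}: Some c = finite cap, None = ∞ *)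
Definition toll_ok (c : option R) (v : R) : Prop :=
  0 <= v /\ match c with Some c0 => v <= c0 | None => True end.

Definition update (t : nat -> R) (i : nat) (v : R) : nat -> R :=
  fun j => if Nat.eqb j i then v else t j.

(* t ∈ T(c): tolls within [0,c] and no link i can raise its profit
   t_i x_i(t) by a unilateral deviation t'_i ∈ [0,c], flows recomputed as
   Wardrop equilibria (which are unique). *)
Definition in_T (n : nat) (l : nat -> R -> R) (c : option R) (t : nat -> R) : Prop :=
  (forall i, (i < n)%nat -> toll_ok c (t i)) /\
  forall i, (i < n)%nat -> forall v, toll_ok c v ->
    forall x x', wardrop n l t x -> wardrop n l (update t i v) x' ->
      v * x' i <= t i * x i.

Definition lat (n : nat) (i : nat) (y : R) : R :=
  if Nat.ltb i (n - 1) then y else 1 / (2 * (INR n - 1)).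

Definition x_eq (n : nat) (i : nat) : R :=
  if Nat.ltb i (n - 1) then 1 / (2 * (INR n - 1)) else 1 / 2.

Definition x_opt (n : nat) (i : nat) : R :=
  if Nat.ltb i (n - 1) then 1 / (4 * (INR n - 1)) else 3 / 4.

(* Main.v *)
Require Import Defs.
From Stdlib Require Import Reals Lra Lia Arith.
Open Scope R_scope.

Definition aa (m : nat) : R := 1 / (2 * INR m).

Lemma aa_pos m : (1 <= m)%nat -> 0 < aa m.
Proof. intros H. unfold aa. assert (0 < INR m) by (apply lt_0_INR; lia).
 apply Rdiv_lt_0_compat; lra. Qed.

Lemma aa_mul m : (1 <= m)%nat -> INR m * aa m = 1/2.
Proof. intros H. unfold aa. assert (0 < INR m) by (apply lt_0_INR; lia). field. lra. Qed.

Lemma lat_lt m i y : (i < m)%nat -> lat (S m) i y = y.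
Proof. intros H. unfold lat. replace (S m - 1)%nat with m by lia.
 rewrite (proj2 (Nat.ltb_lt i m) H). reflexivity. Qed.

Lemma lat_m m y : lat (S m) m y = aa m.
Proof. unfold lat, aa. replace (S m - 1)%nat with m by lia. rewrite Nat.ltb_irrefl.
 rewrite S_INR. replace (INR m + 1 - 1) with (INR m) by ring. reflexivity. Qed.

Lemma x_eq_lt m i : (i < m)%nat -> x_eq (S m) i = aa m.
Proof. intros H. unfold x_eq, aa. replace (S m - 1)%nat with m by lia.
 rewrite (proj2 (Nat.ltb_lt i m) H). rewrite S_INR.
 replace (INR m + 1 - 1) with (INR m) by ring. reflexivity. Qed.

Lemma x_eq_m m : x_eq (S m) m = 1/2.
Proof. unfold x_eq. replace (S m - 1)%nat with m by lia. rewrite Nat.ltb_irrefl. reflexivity. Qed.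

Lemma x_opt_lt m i : (1 <= m)%nat -> (i < m)%nat -> x_opt (S m) i = aa m / 2.
Proof. intros Hm H. unfold x_opt, aa. replace (S m - 1)%nat with m by lia.
 assert (0 < INR m) by (apply lt_0_INR; lia).
 rewrite (proj2 (Nat.ltb_lt i m) H). rewrite S_INR.
 replace (INR m + 1 - 1) with (INR m) by ring. field. lra. Qed.

Lemma x_opt_m m : x_opt (S m) m = 3/4.
Proof. unfold x_opt. replace (S m - 1)%nat with m by lia. rewrite Nat.ltb_irrefl. reflexivity. Qed.

Lemma rsum_S k f : rsum (S k) f = rsum k f + f k.
Proof. reflexivity. Qed.

Lemma rsum_ext k f g : (forall i, (i < k)%nat -> f i = g i) -> rsum k f = rsum k g.
Proof. induction k; intros H; simpl; [reflexivity|].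
 rewrite IHk by (intros; apply H; lia). rewrite H by lia. reflexivity. Qed.

Lemma rsum_le k f g : (forall i, (i < k)%nat -> f i <= g i) -> rsum k f <= rsum k g.
Proof. induction k; intros H; simpl; [lra|].
 assert (rsum k f <= rsum k g) by (apply IHk; intros; apply H; lia).
 assert (f k <= g k) by (apply H; lia). lra. Qed.

Lemma rsum_const k c : rsum k (fun _ => c) = INR k * c.
Proof. induction k; [simpl; ring|]. rewrite rsum_S, IHk, S_INR. ring. Qed.

Lemma rsum_nonneg k f : (forall i, (i<k)%nat -> 0 <= f i) -> 0 <= rsum k f.
Proof. intros H. rewrite <- (Rmult_0_r (INR k)). rewrite <- rsum_const. apply rsum_le. auto. Qed.

Lemma rsum_zero k f : (forall i, (i<k)%nat -> 0 <= f i) -> rsum k f <= 0 ->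
  forall i, (i<k)%nat -> f i = 0.
Proof. induction k; intros H Hs i Hi; [lia|]. rewrite rsum_S in Hs.
 assert (0 <= rsum k f) by (apply rsum_nonneg; intros; apply H; lia).
 assert (0 <= f k) by (apply H; lia).
 destruct (Nat.eq_dec i k). subst; lra.
 apply IHk; [intros; apply H; lia | lra | lia]. Qed.

Lemma rsum_upd k f g i : (i < k)%nat -> (forall j, (j<k)%nat -> j <> i -> g j = f j) ->
  rsum k g = rsum k f - f i + g i.
Proof. induction k; intros Hi H; [lia|]. rewrite !rsum_S.
 destruct (Nat.eq_dec i k).
 - subst. rewrite (rsum_ext k g f) by (intros; apply H; lia). ring.
 - rewrite IHk by (try lia; intros; apply H; lia). rewrite (H k) by lia. ring. Qed.

Lemma rsum_sq k y b : rsum k (fun i => y i * y i) =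
  rsum k (fun i => (y i - b) * (y i - b)) + 2 * b * rsum k y - INR k * (b * b).
Proof. induction k; [simpl; ring|]. rewrite !rsum_S, IHk, S_INR. ring. Qed.

Definition G (m : nat) (s : nat -> R) (sg : R) (i : nat) : R :=
  if Nat.ltb i m then Rmax 0 (aa m + sg - s i)
  else 1 - rsum m (fun j => Rmax 0 (aa m + sg - s j)).

Lemma G_lt m s sg i : (i < m)%nat -> G m s sg i = Rmax 0 (aa m + sg - s i).
Proof. intros H. unfold G. rewrite (proj2 (Nat.ltb_lt i m) H). reflexivity. Qed.
Lemma G_m m s sg : G m s sg m = 1 - rsum m (fun j => Rmax 0 (aa m + sg - s j)).
Proof. unfold G. rewrite Nat.ltb_irrefl. reflexivity. Qed.

Lemma G_wardrop m s sg s' : (forall i, (i < m)%nat -> s' i = s i) -> s' m = sg ->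
  rsum m (fun j => Rmax 0 (aa m + sg - s j)) <= 1 ->
  wardrop (S m) (lat (S m)) s' (G m s sg).
Proof.
  intros Hs Hm Hsum.
  assert (Hc : forall i, (i < S m)%nat -> aa m + sg <= lat (S m) i (G m s sg i) + s' i /\
     (0 < G m s sg i -> lat (S m) i (G m s sg i) + s' i = aa m + sg)).
  { intros i Hi. destruct (Nat.eq_dec i m).
    - subst i. rewrite lat_m, Hm. split; intros; lra.
    - assert (i < m)%nat by lia. rewrite lat_lt, G_lt, Hs by assumption.
      destruct (Rle_dec 0 (aa m + sg - s i)).
      + rewrite Rmax_right by assumption. split; intros; lra.
      + rewrite Rmax_left by lra. split; intros; lra. }
  split.
  - split.
    + intros i Hi. destruct (Nat.eq_dec i m).
      * subst i. rewrite G_m. lra.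
      * rewrite G_lt by lia. apply Rmax_l.
    + rewrite rsum_S, G_m.
      rewrite (rsum_ext m (G m s sg) (fun j => Rmax 0 (aa m + sg - s j)))
        by (intros; apply G_lt; assumption). ring.
  - intros i j Hi Hj Hpos. destruct (Hc i Hi) as [_ H1]. destruct (Hc j Hj) as [H2 _].
    rewrite H1 by assumption. exact H2.
Qed.

Lemma char m t x : wardrop (S m) (lat (S m)) t x -> 0 < x m ->
  (forall i, (i < m)%nat -> x i = Rmax 0 (aa m + t m - t i)) /\ x m = 1 - rsum m x.
Proof.
  intros [[Hnn Hsum] Hw] Hxm. split.
  - intros i Hi. pose proof (Hw m i ltac:(lia) ltac:(lia) Hxm) as H1.
    rewrite lat_m, lat_lt in H1 by assumption.
    assert (0 <= x i) by (apply Hnn; lia).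
    destruct (Rlt_dec 0 (x i)) as [Hp|Hp].
    + pose proof (Hw i m ltac:(lia) ltac:(lia) Hp) as H2. rewrite lat_m, lat_lt in H2 by assumption.
      rewrite Rmax_right by lra. lra.
    + rewrite Rmax_left by lra. lra.
  - rewrite rsum_S in Hsum. lra.
Qed.

Lemma untolled m t x : (1 <= m)%nat -> (forall i, (i < S m)%nat -> t i = 0) ->
  wardrop (S m) (lat (S m)) t x -> forall i, (i < S m)%nat -> x i = x_eq (S m) i.
Proof.
  intros Hm Ht Hx.
  pose proof (aa_pos m Hm) as Ha.
  assert (Hxm : 0 < x m).
  { destruct Hx as [[Hnn Hsum] Hw].
    destruct (Rlt_dec 0 (x m)) as [h|h]; [exact h|exfalso].
    assert (Hx0 : x m = 0) by (pose proof (Hnn m ltac:(lia)); lra).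
    assert (Hle : rsum m x <= rsum m (fun _ => aa m)).
    { apply rsum_le. intros i Hi. destruct (Rlt_dec 0 (x i)) as [Hp|Hp].
      - pose proof (Hw i m ltac:(lia) ltac:(lia) Hp) as H2. rewrite lat_m, lat_lt in H2 by assumption.
        rewrite !Ht in H2 by lia. lra.
      - lra. }
    rewrite rsum_const, aa_mul in Hle by assumption. rewrite rsum_S in Hsum. lra. }
  destruct (char m t x Hx Hxm) as [H1 H2].
  assert (Hi : forall i, (i<m)%nat -> x i = aa m).
  { intros i Hi. rewrite H1, !Ht by lia. rewrite Rmax_right; lra. }
  intros i Hi'. destruct (Nat.eq_dec i m).
  - subst i. rewrite x_eq_m, H2. rewrite (rsum_ext m x (fun _ => aa m)) by assumption.
    rewrite rsum_const, aa_mul by assumption. lra.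
  - rewrite x_eq_lt, Hi by lia. reflexivity.
Qed.

Definition capmin (c : option R) (w : R) : R :=
  match c with Some c0 => Rmin w c0 | None => w end.

Lemma capmin_le c w : capmin c w <= w.
Proof. destruct c; simpl; [apply Rmin_l | lra]. Qed.

Lemma capmin_ok c w : 0 <= w -> (forall c0, c = Some c0 -> 0 <= c0) -> toll_ok c (capmin c w).
Proof. intros Hw Hc. destruct c as [c0|]; simpl; unfold toll_ok.
 - pose proof (Hc c0 eq_refl). split; [|apply Rmin_r].
   unfold Rmin; destruct (Rle_dec w c0); lra.
 - split; [lra|exact I]. Qed.

Lemma capmin_gt c w y : toll_ok c y -> capmin c w < y -> w < y.
Proof. destruct c as [c0|]; simpl; unfold toll_ok.
 - intros [H1 H2] H. unfold Rmin in H; destruct (Rle_dec w c0); lra.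
 - auto. Qed.

Lemma toll_ok_down c y v : toll_ok c y -> 0 <= v <= y -> toll_ok c v.
Proof. destruct c as [c0|]; unfold toll_ok; intros [H1 H2] H; split; try lra; auto. Qed.

Lemma dev_m m c t x v : in_T (S m) (lat (S m)) c t -> wardrop (S m) (lat (S m)) t x ->
  toll_ok c v -> rsum m (fun j => Rmax 0 (aa m + v - t j)) <= 1 ->
  v * (1 - rsum m (fun j => Rmax 0 (aa m + v - t j))) <= t m * x m.
Proof.
  intros [_ HT] Hx Hv Hs.
  assert (Hw : wardrop (S m) (lat (S m)) (update t m v) (G m t v)).
  { apply G_wardrop; auto.
    - intros i Hi. unfold update. rewrite (proj2 (Nat.eqb_neq i m)) by lia. reflexivity.
    - unfold update. rewrite Nat.eqb_refl. reflexivity. }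
  pose proof (HT m ltac:(lia) v Hv x (G m t v) Hx Hw) as H. rewrite G_m in H. exact H.
Qed.

Lemma dev_i m c t x i v : in_T (S m) (lat (S m)) c t -> wardrop (S m) (lat (S m)) t x -> 0 < x m ->
  (i < m)%nat -> toll_ok c v ->
  Rmax 0 (aa m + t m - v) <= Rmax 0 (aa m + t m - t i) + x m ->
  v * Rmax 0 (aa m + t m - v) <= t i * Rmax 0 (aa m + t m - t i).
Proof.
  intros HT' Hx Hxm Hi Hv Hle. destruct HT' as [_ HT].
  destruct (char m t x Hx Hxm) as [H1 H2].
  assert (Hsm : update t i v m = t m)
    by (unfold update; rewrite (proj2 (Nat.eqb_neq m i)) by lia; reflexivity).
  assert (Hsi : update t i v i = v) by (unfold update; rewrite Nat.eqb_refl; reflexivity).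
  assert (Hsum : rsum m (fun j => Rmax 0 (aa m + t m - update t i v j)) =
     rsum m (fun j => Rmax 0 (aa m + t m - t j)) - Rmax 0 (aa m + t m - t i) + Rmax 0 (aa m + t m - v)).
  { rewrite (rsum_upd m (fun j => Rmax 0 (aa m + t m - t j)) (fun j => Rmax 0 (aa m + t m - update t i v j)) i Hi).
    - rewrite Hsi. reflexivity.
    - intros j Hj Hne. unfold update. rewrite (proj2 (Nat.eqb_neq j i)) by assumption. reflexivity. }
  assert (HX : rsum m x = rsum m (fun j => Rmax 0 (aa m + t m - t j))) by (apply rsum_ext; exact H1).
  assert (Hw : wardrop (S m) (lat (S m)) (update t i v) (G m (update t i v) (t m))).
  { apply G_wardrop; auto. rewrite Hsum. lra. }
  pose proof (HT i ltac:(lia) v Hv x (G m (update t i v) (t m)) Hx Hw) as HH.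
  rewrite G_lt, Hsi, H1 in HH by assumption. exact HH.
Qed.

Lemma part3 m c t x : (1 <= m)%nat -> (forall c0, c = Some c0 -> 0 <= c0) ->
  in_T (S m) (lat (S m)) c t -> wardrop (S m) (lat (S m)) t x ->
  forall i, (i < S m)%nat -> x i = x_eq (S m) i.
Proof.
  intros Hm Hc HT Hx.
  pose proof (aa_pos m Hm) as Ha. pose proof (aa_mul m Hm) as Ham.
  assert (HM : 0 < INR m) by (apply lt_0_INR; lia).
  assert (Hok : forall i, (i < S m)%nat -> toll_ok c (t i)) by (apply (proj1 HT)).
  assert (Ht0 : forall i, (i < S m)%nat -> 0 <= t i) by (intros i Hi; apply (Hok i Hi)).
  assert (Hxm : 0 < x m).
  { destruct (Rlt_dec 0 (x m)) as [h|h]; [exact h|exfalso].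
    assert (Hx0 : x m = 0) by (destruct Hx as [[Hnn _] _]; pose proof (Hnn m ltac:(lia)); lra).
    assert (Hdev : forall v, 0 < v -> v <= aa m / 2 -> toll_ok c v -> False).
    { intros v Hv1 Hv2 Hv.
      assert (Hs : rsum m (fun j => Rmax 0 (aa m + v - t j)) <= INR m * (aa m + v)).
      { rewrite <- rsum_const. apply rsum_le. intros j Hj. cbv beta.
        apply Rmax_lub; [lra|]. pose proof (Ht0 j ltac:(lia)). lra. }
      assert (Hmv : INR m * v <= INR m * (aa m / 2)) by (apply Rmult_le_compat_l; lra).
      assert (Hs2 : rsum m (fun j => Rmax 0 (aa m + v - t j)) <= 3/4) by nra.
      pose proof (dev_m m c t x v HT Hx Hv ltac:(lra)) as HD.
      rewrite Hx0, Rmult_0_r in HD. nra. }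
    destruct c as [c0|].
    - pose proof (Hc c0 eq_refl) as Hc0. destruct (Rlt_dec 0 c0) as [Hp|Hp].
      + apply (Hdev (Rmin c0 (aa m / 2))).
        * unfold Rmin; destruct (Rle_dec c0 (aa m / 2)); lra.
        * apply Rmin_r.
        * split; [unfold Rmin; destruct (Rle_dec c0 (aa m / 2)); lra | apply Rmin_l].
      + assert (Hz : forall i, (i < S m)%nat -> t i = 0) by (intros i Hi; destruct (Hok i Hi); lra).
        pose proof (untolled m t x Hm Hz Hx m ltac:(lia)) as E. rewrite x_eq_m in E. lra.
    - apply (Hdev (aa m / 2)); [lra | lra | split; [lra | exact I]]. }
  destruct (char m t x Hx Hxm) as [HxF Hxm1].
  assert (HA : 0 < aa m + t m) by (pose proof (Ht0 m ltac:(lia)); lra).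
  remember (capmin c ((aa m + t m) / 2)) as tau eqn:Htau.
  assert (Htau_ok : toll_ok c tau) by (rewrite Htau; apply capmin_ok; [lra | exact Hc]).
  assert (Htau_le : tau <= (aa m + t m) / 2) by (rewrite Htau; apply capmin_le).
  assert (Htau0 : 0 <= tau) by (destruct Htau_ok; lra).
  assert (Hall : forall i, (i < m)%nat -> t i = tau).
  { intros i Hi. pose proof (Ht0 i ltac:(lia)) as Hti0. pose proof (Hok i ltac:(lia)) as Hti.
    destruct (Rtotal_order (t i) tau) as [Hlt | [Heq | Hgt]]; [exfalso | exact Heq | exfalso].
    - pose proof (dev_i m c t x i tau HT Hx Hxm Hi Htau_ok) as D.
      rewrite (Rmax_right 0 (aa m + t m - tau)) in D by lra.
      rewrite (Rmax_right 0 (aa m + t m - t i)) in D by lra.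
      assert (Hd := D ltac:(lra)).
      assert (0 < (tau - t i) * (aa m + t m - tau - t i)) by (apply Rmult_lt_0_compat; lra).
      nra.
    - assert (Hg : (aa m + t m)/2 < t i) by (rewrite Htau in Hgt; eapply capmin_gt; eauto).
      destruct (Rlt_dec (t i) (aa m + t m)) as [Hlt2 | Hge2].
      + remember (Rmax ((aa m + t m)/2) (t i - x m)) as v eqn:Hv.
        assert (Hv1 : (aa m + t m)/2 <= v) by (rewrite Hv; apply Rmax_l).
        assert (Hv2 : t i - x m <= v) by (rewrite Hv; apply Rmax_r).
        assert (Hv3 : v < t i) by (rewrite Hv; apply Rmax_lub_lt; lra).
        assert (Hvok : toll_ok c v) by (apply (toll_ok_down c (t i)); [exact Hti | lra]).
        pose proof (dev_i m c t x i v HT Hx Hxm Hi Hvok) as D.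
        rewrite (Rmax_right 0 (aa m + t m - v)) in D by lra.
        rewrite (Rmax_right 0 (aa m + t m - t i)) in D by lra.
        assert (Hd := D ltac:(lra)).
        assert (0 < (t i - v) * (t i + v - (aa m + t m))) by (apply Rmult_lt_0_compat; lra).
        nra.
      + remember (Rmax ((aa m + t m)/2) (aa m + t m - x m / 2)) as v eqn:Hv.
        assert (Hv1 : (aa m + t m)/2 <= v) by (rewrite Hv; apply Rmax_l).
        assert (Hv2 : aa m + t m - x m / 2 <= v) by (rewrite Hv; apply Rmax_r).
        assert (Hv3 : v < aa m + t m) by (rewrite Hv; apply Rmax_lub_lt; lra).
        assert (Hvok : toll_ok c v) by (apply (toll_ok_down c (t i)); [exact Hti | lra]).
        pose proof (dev_i m c t x i v HT Hx Hxm Hi Hvok) as D.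
        rewrite (Rmax_right 0 (aa m + t m - v)) in D by lra.
        rewrite (Rmax_left 0 (aa m + t m - t i)) in D by lra.
        assert (Hd := D ltac:(lra)).
        assert (0 < v * (aa m + t m - v)) by (apply Rmult_lt_0_compat; lra).
        lra. }
  assert (HS0 : rsum m (fun j => Rmax 0 (aa m + t m - t j)) = INR m * (aa m + t m - tau)).
  { rewrite <- rsum_const. apply rsum_ext. intros j Hj. rewrite (Hall j Hj).
    apply Rmax_right. lra. }
  assert (Hxm' : x m = 1 - INR m * (aa m + t m - tau)).
  { rewrite Hxm1, <- HS0, (rsum_ext m x (fun j => Rmax 0 (aa m + t m - t j)) HxF). reflexivity. }
  assert (HS1 : rsum m (fun j => Rmax 0 (aa m + tau - t j)) = INR m * aa m).
  { rewrite <- rsum_const. apply rsum_ext. intros j Hj. rewrite (Hall j Hj).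
    replace (aa m + tau - tau) with (aa m) by ring. apply Rmax_right. lra. }
  pose proof (dev_m m c t x tau HT Hx Htau_ok ltac:(rewrite HS1; lra)) as D.
  rewrite HS1, Ham, Hxm' in D.
  assert (E1 : INR m * aa m * t m = t m / 2) by (rewrite Ham; field).
  assert (E2 : INR m * aa m * tau = tau / 2) by (rewrite Ham; field).
  pose proof (Hok m ltac:(lia)) as Hmok.
  assert (Hst : t m = tau).
  { destruct (Rtotal_order (t m) tau) as [Hlt | [Heq | Hgt]]; [exfalso | exact Heq | exfalso].
    - assert (t m < aa m) by lra.
      assert (0 < (tau - t m) * (INR m * (aa m - t m))) by (apply Rmult_lt_0_compat; nra).
      nra.
    - assert (Hg : (aa m + t m)/2 < t m) by (rewrite Htau in Hgt; eapply capmin_gt; eauto).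
      assert (0 < (t m - tau) * (INR m * (t m - aa m))) by (apply Rmult_lt_0_compat; nra).
      nra. }
  intros i Hi. destruct (Nat.eq_dec i m).
  - subst i. rewrite x_eq_m, Hxm', Hst. replace (aa m + tau - tau) with (aa m) by ring. lra.
  - rewrite x_eq_lt, HxF, (Hall i ltac:(lia)), Hst by lia. replace (aa m + tau - tau) with (aa m) by ring.
    apply Rmax_right. lra.
Qed.

Lemma cost_eq m y : cost (S m) (lat (S m)) y = rsum m (fun i => y i * y i) + aa m * y m.
Proof. unfold cost. rewrite rsum_S, lat_m. f_equal. apply rsum_ext. intros i Hi.
 rewrite lat_lt by assumption. reflexivity. Qed.

Lemma cost_formula m y : feasible (S m) y -> cost (S m) (lat (S m)) y =
  rsum m (fun i => (y i - aa m / 2) * (y i - aa m / 2)) + aa m - INR m * (aa m / 2 * (aa m / 2)).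
Proof. intros [_ Hs]. rewrite cost_eq, (rsum_sq m y (aa m / 2)). rewrite rsum_S in Hs.
 replace (y m) with (1 - rsum m y) by lra. field. Qed.

Theorem mainTheorem14 (n : nat) (hn : (2 <= n)%nat) :
  (* x(0) is the stated flow *)
  (forall x, wardrop n (lat n) (fun _ => 0) x ->
     forall i, (i < n)%nat -> x i = x_eq n i) /\
  (* x* is the (unique) optimal flow *)
  (feasible n (x_opt n) /\
   (forall y, feasible n y -> cost n (lat n) (x_opt n) <= cost n (lat n) y) /\
   (forall y, feasible n y -> cost n (lat n) y <= cost n (lat n) (x_opt n) ->
      forall i, (i < n)%nat -> y i = x_opt n i)) /\
  (* for every cap c and every t in T(c): x(t) = x(0), ratio 8/7 *)
  (forall (c : option R) (t : nat -> R), (forall c0, c = Some c0 -> 0 <= c0) ->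
     in_T n (lat n) c t ->
     forall x, wardrop n (lat n) t x ->
       (forall i, (i < n)%nat -> x i = x_eq n i) /\
       cost n (lat n) x / cost n (lat n) (x_opt n) = 8 / 7) /\
  (* the minimum over caps is attained (some c has an equilibrium) *)
  (exists (c : option R) (t : nat -> R),
     (forall c0, c = Some c0 -> 0 <= c0) /\ in_T n (lat n) c t).
Proof.
  destruct n as [|m]; [lia|]. assert (Hm : (1 <= m)%nat) by lia.
  pose proof (aa_pos m Hm) as Ha. pose proof (aa_mul m Hm) as Ham.
  split; [|split; [|split]].
  - intros x Hx. apply (untolled m (fun _ => 0) x Hm); auto.
  - assert (Hfeas : feasible (S m) (x_opt (S m))).
    { split.
      - intros i Hi. destruct (Nat.eq_dec i m).
        + subst i; rewrite x_opt_m; lra.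
        + rewrite x_opt_lt by lia; lra.
      - rewrite rsum_S, x_opt_m, (rsum_ext m (x_opt (S m)) (fun _ => aa m / 2))
          by (intros; apply x_opt_lt; lia).
        rewrite rsum_const. replace (INR m * (aa m / 2)) with (INR m * aa m / 2) by field.
        rewrite Ham. lra. }
    split; [exact Hfeas|].
    assert (HQ0 : rsum m (fun i => (x_opt (S m) i - aa m / 2) * (x_opt (S m) i - aa m / 2)) = 0).
    { rewrite (rsum_ext m _ (fun _ => 0)). rewrite rsum_const; ring.
      intros i Hi. rewrite x_opt_lt by lia. ring. }
    split.
    + intros y Hy. rewrite !cost_formula by assumption. rewrite HQ0.
      assert (0 <= rsum m (fun i => (y i - aa m / 2) * (y i - aa m / 2)))
        by (apply rsum_nonneg; intros; cbv beta; apply Rle_0_sqr). lra.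
    + intros y Hy Hle. rewrite !cost_formula in Hle by assumption. rewrite HQ0 in Hle.
      assert (HZ := rsum_zero m (fun i => (y i - aa m / 2) * (y i - aa m / 2))
                     ltac:(intros; cbv beta; apply Rle_0_sqr) ltac:(lra)).
      assert (Hyi : forall i, (i<m)%nat -> y i = aa m / 2).
      { intros i Hi. specialize (HZ i Hi). simpl in HZ.
        destruct (Rmult_integral _ _ HZ); lra. }
      intros i Hi. destruct (Nat.eq_dec i m).
      * subst i. rewrite x_opt_m. destruct Hy as [_ Hs].
        rewrite rsum_S, (rsum_ext m y (fun _ => aa m / 2) Hyi), rsum_const in Hs.
        replace (INR m * (aa m / 2)) with (INR m * aa m / 2) in Hs by field.
        rewrite Ham in Hs. lra.
      * rewrite x_opt_lt, Hyi by lia. reflexivity.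
  - intros c t Hc HT x Hx. pose proof (part3 m c t x Hm Hc HT Hx) as E. split; [exact E|].
    rewrite (cost_eq m x), (cost_eq m (x_opt (S m))).
    rewrite (rsum_ext m (fun i => x i * x i) (fun _ => aa m * aa m))
      by (intros i Hi; rewrite E, x_eq_lt by lia; reflexivity).
    rewrite (rsum_ext m (fun i => x_opt (S m) i * x_opt (S m) i) (fun _ => aa m / 2 * (aa m / 2)))
      by (intros i Hi; rewrite x_opt_lt by lia; reflexivity).
    rewrite !rsum_const, E, x_eq_m, x_opt_m by lia.
    replace (INR m * (aa m * aa m)) with (aa m / 2)
      by (rewrite <- Rmult_assoc, Ham; field).
    replace (INR m * (aa m / 2 * (aa m / 2))) with (aa m / 8)
      by (replace (INR m * (aa m / 2 * (aa m / 2))) with (INR m * aa m * aa m / 4) by field;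
          rewrite Ham; field).
    field. lra.
  - exists (Some 0), (fun _ => 0). split.
    + intros c0 H. injection H; intros; lra.
    + split.
      * intros i Hi. unfold toll_ok. lra.
      * intros i Hi v [Hv1 Hv2] x x' _ _. assert (v = 0) by lra. subst v. lra.
Qed.
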